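(* Let $n=p^{\alpha}qr$ where $p,q,r$ are distinct primes and $\alpha\geq 1$ is an integer. Then $\mathbb{AG}(\mathbb{Z}_n)$ has no induced cycle of odd length greater than $3$.
   Context: For a commutative ring $R$ with unity, the annihilating-ideal graph $\mathbb{AG}(R)$ is the simple graph whose vertex set is the set of all non-zero ideals of $R$ with non-zero annihilator, two distinct vertices $I,J$ being adjacent if and only if $IJ=0$. An induced cycle is a cycle in the graph with no chords, i.e. an induced subgraph isomorphic to a cycle. *)

(* Defs.v *)
From mathcomp Require Import all_boot all_algebra.
Set Implicit Arguments. Unset Strict Implicit. Unset Printing Implicit Defensive.
Import GRing.Theory.
Local Open Scope ring_scope.

Section AnnihilatingIdealGraph.
Variable R : finComNzRingType.

Definition is_ideal (I : {set R}) : bool :=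
  [&& (0 : R) \in I,
      [forall x in I, forall y in I, x - y \in I] &
      [forall r : R, forall x in I, r * x \in I]].

Definition ann (I : {set R}) : {set R} := [set x | [forall a in I, x * a == 0]].

Definition AG_vertex (I : {set R}) : bool :=
  [&& is_ideal I, I != [set 0] & ann I != [set 0]].

(* product ideal IJ is zero iff all products a*b (a in I, b in J) vanish;
   distinct vertices are adjacent iff IJ = 0 *)
Definition AG_adj (I J : {set R}) : bool :=
  (I != J) && [forall a in I, forall b in J, a * b == 0].
End AnnihilatingIdealGraph.

Definition induced_cycle (T : eqType) (V : pred T) (E : rel T) (x0 : T)
    (s : seq T) : Prop :=
  [/\ (3 <= size s)%N, uniq s, all V s &
      forall i j : nat, (i < size s)%N -> (j < size s)%N ->
        E (nth x0 s i) (nth x0 s j) =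
        (((i.+1 %% size s) == j) || ((j.+1 %% size s) == i))%N].

(* Main.v *)
Require Import Defs.
From mathcomp Require Import all_boot all_algebra.
From mathcomp Require Import zify.
Import GRing.Theory.

Section Ring.
Variable N : nat.
Hypothesis hN : (1 < N)%N.
Local Notation T := 'Z_N.
Local Open Scope ring_scope.

Lemma idB (I : {set T}) x y : is_ideal I -> x \in I -> y \in I -> x - y \in I.
Proof. by case/and3P=> _ /forallP H _ xI yI; move: (H x); rewrite xI /= => /forallP/(_ y); rewrite yI. Qed.

Lemma idM (I : {set T}) c x : is_ideal I -> x \in I -> c * x \in I.
Proof. by case/and3P=> _ _ /forallP/(_ c)/forallP/(_ x); rewrite /= => H xI; rewrite xI in H. Qed.

Lemma id0 (I : {set T}) : is_ideal I -> 0 \in I.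
Proof. by case/and3P. Qed.

Lemma idgcd (I : {set T}) a b : is_ideal I -> (a%:R : T) \in I -> (b%:R : T) \in I ->
  ((gcdn a b)%:R : T) \in I.
Proof.
move=> hI ha hb; case: (posnP a) => [->|apos]; first by rewrite gcd0n.
case: (egcdnP b apos) => km kn E _.
have -> : ((gcdn a b)%:R : T) = (km * a)%:R - (kn * b)%:R by rewrite E natrD addrAC subrr add0r.
by rewrite !natrM; apply: idB => //; apply: idM.
Qed.

Lemma NR0 : (N%:R : T) = 0.
Proof. by apply: val_inj; rewrite /= val_Zp_nat // modnn. Qed.

Lemma valR (x : T) : ((val x)%:R : T) = x.
Proof. by apply: val_inj; rewrite /= val_Zp_nat // modn_small // -[X in (_ < X)%N](Zp_cast hN) ltn_ord. Qed.

Definition D (I : {set T}) := gcdn (\big[gcdn/0%N]_(x in I) val x) N.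

Lemma D_in I : is_ideal I -> ((D I)%:R : T) \in I.
Proof.
move=> hI; rewrite /D; apply: idgcd => //; last by rewrite NR0 id0.
apply: (big_ind (fun m => (m%:R : T) \in I)) => //; first by rewrite id0.
  by move=> ? ?; apply: idgcd.
by move=> x xI; rewrite valR.
Qed.

Lemma D_mem I x : is_ideal I -> (x \in I) = (D I %| val x)%N.
Proof.
move=> hI; apply/idP/idP => [xI|/dvdnP [m hm]].
  apply: dvdn_trans (dvdn_gcdl _ _) _.
  by move/dvdn_biggcdP: (dvdnn (\big[gcdn/0%N]_(x in I) val x)); apply.
by rewrite -(valR x) hm natrM; apply: idM => //; apply: D_in.
Qed.

Lemma D_dvd I : (D I %| N)%N.
Proof. exact: dvdn_gcdr. Qed.

Lemma D_sub I J : is_ideal I -> is_ideal J -> (D J %| D I)%N -> {subset I <= J}.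
Proof. by move=> hI hJ hd x; rewrite D_mem // D_mem //; apply: dvdn_trans. Qed.
End Ring.
Arguments D {N} I.
Arguments D_dvd {N} I.

Lemma comp_dvd p q r a d1 d2 : prime p -> prime q -> prime r -> p != q -> q != r -> p != r ->
  (d1 %| p ^ a * q * r) -> (d2 %| p ^ a * q * r) ->
  (q %| d1) = (q %| d2) -> (r %| d1) = (r %| d2) -> logn p d1 <= logn p d2 -> d1 %| d2.
Proof.
move=> pp pq pr npq nqr npr h1 h2 eq er hl.
have Npos : 0 < p ^ a * q * r by rewrite !muln_gt0 expn_gt0 !prime_gt0.
have d1pos : 0 < d1 by apply: dvdn_gt0 h1.
have d2pos : 0 < d2 by apply: dvdn_gt0 h2.
have logN l : prime l -> l != p -> logn l (p ^ a * q * r) = (l == q) + (l == r).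
  move=> pl nlp; rewrite !lognM ?muln_gt0 ?expn_gt0 ?prime_gt0 // lognX !logn_prime //.
  by rewrite (negbTE nlp) muln0.
apply/dvdn_partP => // l; rewrite mem_primes => /and3P [pl _ ld1].
rewrite p_part pfactor_dvdn //.
have : l %| p ^ a * q * r by apply: dvdn_trans h1.
rewrite !Euclid_dvdM // Euclid_dvdX // !dvdn_prime2 //.
case/orP => [/orP [/andP [/eqP -> _] | /eqP El] | /eqP El]; first by [].
- subst l.
  have : logn q d1 <= logn q (p ^ a * q * r) by apply: dvdn_leq_log.
  rewrite logN //; last by rewrite eq_sym.
  rewrite eqxx (negbTE nqr) => h.
  apply: leq_trans h _; rewrite -(pfactor_dvdn 1) // expn1 -eq //.
- subst l.
  have : logn r d1 <= logn r (p ^ a * q * r) by apply: dvdn_leq_log.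
  rewrite logN //; last by rewrite eq_sym.
  have nrq : (r == q) = false by rewrite eq_sym (negbTE nqr).
  rewrite eqxx nrq => h.
  apply: leq_trans h _; rewrite -(pfactor_dvdn 1) // expn1 -er //.
Qed.
Lemma succmod k a : a < k -> a.+1 %% k = if a.+1 < k then a.+1 else 0.
Proof.
move=> ak; case: ifP => h; first by rewrite modn_small.
have -> : a.+1 = k by lia.
by rewrite modnn.
Qed.

Lemma no_sub (R : finComNzRingType) (s : seq {set R}) i j :
  induced_cycle (@AG_vertex R) (@AG_adj R) set0 s -> 5 <= size s ->
  i < size s -> j < size s -> i != j ->
  {subset nth set0 s i <= nth set0 s j} -> False.
Proof.
case=> _ Hu _ HE k5 ik jk nij sub.
set k := size s in k5 ik jk HE.
set jp := if j.+1 < k then j.+1 else 0.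
set jm := if j == 0 then k.-1 else j.-1.
have jpk : jp < k by rewrite /jp; case: ifP => //; lia.
have jmk : jm < k by rewrite /jm; case: ifP => _; lia.
have Ejp : j.+1 %% k = jp by rewrite succmod.
have Ejm : jm.+1 %% k = j.
  rewrite succmod // /jm; case: (j =P 0) => [->|/eqP ?] /=; case: ifP => ?; lia.
have key : forall l, l < k -> l.+1 %% k = j \/ j.+1 %% k = l ->
   i = l \/ ((i.+1 %% k == l) || (l.+1 %% k == i)).
  move=> l lk hl.
  have : AG_adj (nth set0 s j) (nth set0 s l) by rewrite HE //; case: hl => ->; rewrite eqxx ?orbT.
  case/andP=> _ /forallP H.
  case: (eqVneq i l) => [->|nil]; first by left.
  right; rewrite -HE //; apply/andP; split.
    by rewrite nth_uniq.
  apply/forallP => a; apply/implyP => ai; by move: (H a); rewrite (sub a ai).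
have [hp|hp] := key jp jpk (or_intror Ejp);
have [hm|hm] := key jm jmk (or_introl Ejm); move: hp hm Ejp Ejm;
  rewrite ?succmod // /jp /jm;
  repeat (case: ifP => ?); lia.
Qed.

Theorem lemma4 (p q r alpha : nat) :
  prime p -> prime q -> prime r -> p != q -> q != r -> p != r -> (1 <= alpha)%N ->
  forall s : seq {set 'Z_(p ^ alpha * q * r)},
    induced_cycle (@AG_vertex _) (@AG_adj _) set0 s ->
    odd (size s) -> (size s <= 3)%N.
Proof.
move=> pp pq pr npq nqr npr ha s Hc Hodd.
rewrite leqNgt; apply/negP => s3.
have s5 : (5 <= size s)%N.
  case: (size s) Hodd s3 => [|[|[|[|[|]]]]] //.
have hN : (1 < p ^ alpha * q * r)%N.
  apply: (@leq_trans q); first exact: prime_gt1.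
  by rewrite -mulnA mulnCA leq_pmulr // muln_gt0 expn_gt0 !prime_gt0.
pose t (I : {set 'Z_(p ^ alpha * q * r)}) := (q %| D I, r %| D I)%N.
have nu : ~~ uniq (map t s).
  apply/negP => /card_uniqP; rewrite size_map => hc.
  have := max_card (mem (map t s)); rewrite hc card_prod card_bool.
  by move: s5; case: (size s) => [|[|[|[|[|]]]]].
case/(uniqPn (t set0)): nu => i [j [lij jk]]; rewrite size_map in jk.
have ik : (i < size s)%N by apply: ltn_trans jk.
rewrite !(nth_map set0) // => /pair_equal_spec [eq er].
have [c3 Hu Hv HE] := Hc.
have vi : AG_vertex (nth set0 s i) by apply: (allP Hv); rewrite mem_nth.
have vj : AG_vertex (nth set0 s j) by apply: (allP Hv); rewrite mem_nth.
have idi : is_ideal (nth set0 s i) by case/and3P: vi.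
have idj : is_ideal (nth set0 s j) by case/and3P: vj.
have nij : i != j by rewrite neq_ltn lij.
case: (leqP (logn p (D (nth set0 s i))) (logn p (D (nth set0 s j)))) => hl.
- have hd := @comp_dvd p q r alpha _ _ pp pq pr npq nqr npr (D_dvd (nth set0 s i)) (D_dvd (nth set0 s j)) eq er hl.
  apply: (@no_sub _ s j i) => //; first by rewrite eq_sym.
  exact: D_sub.
- have hd := @comp_dvd p q r alpha _ _ pp pq pr npq nqr npr (D_dvd (nth set0 s j)) (D_dvd (nth set0 s i)) (esym eq) (esym er) (ltnW hl).
  apply: (@no_sub _ s i j) => //.
  exact: D_sub.
Qed.
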